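(* Let $I\subseteq S=\Bbbk[x_1,\dots,x_n]$ be a squarefree monomial ideal which is Gotzmann in $S$, and suppose $I\subseteq(x_i)$. Then the ideal $\frac{1}{x_i}I=\{f\in S: x_if\in I\}$ (generated by the monomials $m/x_i$ for $m$ a minimal generator of $I$) is Gotzmann in $S$.
   Context: Let $\Bbbk$ be a field and $S=\Bbbk[x_1,\dots,x_n]$, $\mathbf m=(x_1,\dots,x_n)$. A monomial ideal is squarefree if its minimal monomial generators are squarefree. For a homogeneous ideal $I$, $I_d$ is its degree-$d$ component, $|I_d|$ its $\Bbbk$-dimension, and $\mathbf m_1I_d$ the span of $\{x_jf: f\in I_d\}$. An ideal $I$ of $S$ is Gotzmann if for every $d$ and every homogeneous ideal $J\subseteq S$ with $|J_d|=|I_d|$ one has $|\mathbf m_1I_d|\le|\mathbf m_1J_d|$. *)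

(* Defs.v *)
From HB Require Import structures.
From mathcomp Require Import all_boot all_order all_algebra.
Set Implicit Arguments. Unset Strict Implicit. Unset Printing Implicit Defensive.
Import Order.TTheory GRing.Theory Num.Theory.
Local Open Scope ring_scope.

(* Monomials of degree d in n variables x_0..x_(n-1): exponent vectors
   (entries bounded by d) with total degree d. *)
Definition mon (n d : nat) : predArgType :=
  {m : {ffun 'I_n -> 'I_d.+1} | (\sum_(i < n) (m i : nat) == d)%N}.
HB.instance Definition _ n d := [Finite of mon n d by <:].

Definition expo n d (m : mon n d) (i : 'I_n) : nat := val m i.

(* S_d: homogeneous polynomials of degree d over F, as coefficient vectors
   indexed by the degree-d monomials (a finite-dimensional F-vector space). *)
Definition hpoly (F : fieldType) (n d : nat) := {ffun mon n d -> F^o}.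

Definition coef (F : fieldType) n d (f : hpoly F n d) (e : 'I_n -> nat) : F :=
  \sum_(m : mon n d | [forall i, expo m i == e i]) f m.

Definition mulx (F : fieldType) n d (j : 'I_n) (f : hpoly F n d) : hpoly F n d.+1 :=
  [ffun m : mon n d.+1 =>
     if (0 < expo m j)%N then coef f (fun i => (expo m i - (i == j))%N) else 0].

Definition mulxL (F : fieldType) n d (j : 'I_n) : 'Hom(hpoly F n d, hpoly F n d.+1) :=
  linfun (@mulx F n d j).

Definition m1 (F : fieldType) n d (V : {vspace hpoly F n d}) : {vspace hpoly F n d.+1} :=
  (\sum_(j < n) (mulxL F d j @: V))%VS.

(* A homogeneous ideal of S, given by its graded components I_d (subspaces of S_d)
   closed under multiplication by the variables. *)
Definition graded (F : fieldType) n := forall d : nat, {vspace hpoly F n d}.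

Definition is_hideal (F : fieldType) n (I : graded F n) : Prop :=
  forall (d : nat) (j : 'I_n) (f : hpoly F n d), f \in I d -> mulx j f \in I d.+1.

Definition Gotzmann (F : fieldType) n (I : graded F n) : Prop :=
  forall (d : nat) (J : graded F n), is_hideal J ->
    \dim (J d) = \dim (I d) -> (\dim (m1 (I d)) <= \dim (m1 (J d)))%N.

Definition monp (F : fieldType) n d (m : mon n d) : hpoly F n d :=
  [ffun m' => if m' == m then 1 else 0].

Definition monideal (F : fieldType) n (gens : seq {ffun 'I_n -> nat}) : graded F n :=
  fun d => (<<[seq monp F m | m <- enum (mon n d) &
                 has (fun g : {ffun 'I_n -> nat} => [forall i, g i <= expo m i]%N) gens]>>)%VS.

Definition squarefree_gens n (gens : seq {ffun 'I_n -> nat}) : bool :=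
  all (fun g : {ffun 'I_n -> nat} => [forall i, g i <= 1]%N) gens.

Definition var_exp n (i : 'I_n) : {ffun 'I_n -> nat} := [ffun k => nat_of_bool (k == i)].
Definition xideal (F : fieldType) n (i : 'I_n) : graded F n := monideal F [:: var_exp i].

Definition colon_var (F : fieldType) n (I : graded F n) (i : 'I_n) : graded F n :=
  fun d => (mulxL F d i @^-1: I d.+1)%VS.

(* Main.v *)
Require Import Defs.
From HB Require Import structures.
From mathcomp Require Import all_boot all_order all_algebra.
Set Implicit Arguments. Unset Strict Implicit. Unset Printing Implicit Defensive.
Import Order.TTheory GRing.Theory Num.Theory.
Local Open Scope ring_scope.

Section S.
Variables (F : fieldType) (n : nat).

Lemma expo_inj d (m m' : mon n d) : (forall k, expo m k = expo m' k) -> m = m'.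
Proof.
move=> h; apply: val_inj; apply/ffunP=> k; apply: val_inj; exact: h.
Qed.

Lemma sum_expo d (m : mon n d) : (\sum_(k < n) expo m k)%N = d.
Proof. by case: m => f hf; apply/eqP. Qed.

Lemma coef_ext d (f : hpoly F n d) e e' : e =1 e' -> coef f e = coef f e'.
Proof.
move=> h; rewrite /coef; apply: eq_bigl => m; apply: eq_forallb => k; by rewrite h.
Qed.

Lemma coefE d (f : hpoly F n d) m : coef f (expo m) = f m.
Proof.
rewrite /coef (big_pred1 m) // => m'; rewrite /=.
apply/forallP/eqP => [h|->//]; apply: expo_inj => k; exact/eqP/h.
Qed.

Lemma coef_out d (f : hpoly F n d) e : (\sum_(k < n) e k)%N != d -> coef f e = 0.
Proof.
move=> h; rewrite /coef big_pred0 // => m; apply/negP => /forallP hm.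
move: h; rewrite -(sum_expo m) => /eqP; apply; apply: eq_bigr => k _.
exact/esym/eqP.
Qed.

Lemma hpolyP d (f g : hpoly F n d) : (forall e, coef f e = coef g e) -> f = g.
Proof. by move=> h; apply/ffunP => m; rewrite -!coefE. Qed.

Lemma coef_lin d a (f g : hpoly F n d) e : coef (a *: f + g) e = a * coef f e + coef g e.
Proof.
rewrite /coef mulr_sumr -big_split /=; apply: eq_bigr => m _; by rewrite !ffunE.
Qed.

Lemma leq_sum1 (e : 'I_n -> nat) k : (e k <= \sum_(k0 < n) e k0)%N.
Proof. by rewrite (bigD1 k) //= leq_addr. Qed.

Lemma exists_mon d (e : 'I_n -> nat) : (\sum_(k < n) e k)%N = d ->
  exists m : mon n d, forall k, expo m k = e k.
Proof.
move=> hs.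
have hb k : (e k < d.+1)%N by rewrite ltnS -hs leq_sum1.
pose f := [ffun k => Ordinal (hb k)] : {ffun 'I_n -> 'I_d.+1}.
have hf : (\sum_(k < n) (f k : nat) == d)%N.
  by apply/eqP; rewrite -[in RHS]hs; apply: eq_bigr => k _; rewrite ffunE.
by exists (exist _ f hf) => k; rewrite /expo /= ffunE.
Qed.

Definition dl (j : 'I_n) (e : 'I_n -> nat) := fun k => (e k - (k == j))%N.

Lemma coef_mulx d j (f : hpoly F n d) e :
  coef (mulx j f) e = if (0 < e j)%N then coef f (dl j e) else 0.
Proof.
have [hs|hs] := eqVneq (\sum_(k < n) e k)%N d.+1.
  have [m hm] := exists_mon hs.
  rewrite (coef_ext _ (fun k => esym (hm k))) coefE ffunE hm.
  case: ifP => // _; apply: coef_ext => k; by rewrite /dl hm.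
rewrite coef_out //; case: ifP => // hj; rewrite coef_out //.
apply: contra hs => /eqP <-.
rewrite (bigD1 j) //= [in X in _ == X](bigD1 j) //= /dl eqxx -addSn subn1 prednK //.
apply/eqP; congr (_ + _)%N; apply: eq_bigr => k hk; by rewrite (negbTE hk) subn0.
Qed.

Lemma mulx_comm d i j (f : hpoly F n d) : mulx i (mulx j f) = mulx j (mulx i f).
Proof.
apply: hpolyP => e; rewrite !coef_mulx.
have [->//|hij] := eqVneq i j.
rewrite /dl (negbTE hij) eq_sym (negbTE hij) !subn0.
have -> : coef f (dl j (dl i e)) = coef f (dl i (dl j e)).
  by apply: coef_ext => k; rewrite /dl subnAC.
by case: (0 < e i)%N; case: (0 < e j)%N.
Qed.

Lemma coef_monp d (m : mon n d) e :
  coef (monp F m) e = if [forall k, expo m k == e k] then 1 else 0.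
Proof.
case: ifP => [/forallP h|/negbT h].
  by rewrite -(coef_ext _ (fun k => eqP (h k))) coefE ffunE eqxx.
have [hs|hs] := eqVneq (\sum_(k < n) e k)%N d; last exact: coef_out.
have [m0 hm0] := exists_mon hs.
rewrite -(coef_ext _ hm0) coefE ffunE; case: eqP => // h0; subst m0.
by move: h; rewrite negb_forall => /existsP [k]; rewrite hm0 eqxx.
Qed.

Lemma monp_mulx d i (m : mon n d.+1) (m' : mon n d) :
  (0 < expo m i)%N -> (forall k, expo m' k = dl i (expo m) k) ->
  monp F m = mulx i (monp F m').
Proof.
move=> hi hm'; apply: hpolyP => e; rewrite coef_mulx !coef_monp.
case: (boolP [forall k, expo m k == e k]) => [/forallP h|h].
  have hei : (0 < e i)%N by rewrite -(eqP (h i)).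
  rewrite hei; case: forallP => // [[]] k.
  by rewrite hm' /dl (eqP (h k)).
case: ifP => // hei; case: forallP => // h2; case/negP: h; apply/forallP => k.
move: (eqP (h2 k)); rewrite hm' /dl.
have [->|_] := eqVneq k i; last by rewrite !subn0 => ->.
by rewrite !subn1 => /eqP; rewrite -(eqn_add2r 1) !addn1 !prednK.
Qed.

Lemma mulx_inj d i (f : hpoly F n d) : mulx i f = 0 -> f = 0.
Proof.
move=> h; apply/ffunP => m; rewrite ffunE -coefE.
pose e k := (expo m k + (k == i))%N.
have := coef_mulx i f e; rewrite h /coef big1 ?ffunE //; last by move=> *; rewrite ffunE.
rewrite /e eqxx addn1 /= => hh.
rewrite [RHS]hh; apply: eq_bigl => m0; apply: eq_forallb => k; by rewrite /dl addnK.
Qed.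
End S.

Lemma sum_dl n (j : 'I_n) (e : 'I_n -> nat) : (0 < e j)%N ->
  (\sum_(k < n) e k)%N = (\sum_(k < n) dl j e k).+1.
Proof.
move=> hj.
rewrite (bigD1 j) //= [in RHS](bigD1 j) //= /dl eqxx -addSn subn1 prednK //.
congr (_ + _)%N; apply: eq_bigr => k hk; by rewrite (negbTE hk) subn0.
Qed.

Lemma mulx_is_linear F n d j : linear (@mulx F n d j).
Proof.
move=> a f g; apply/ffunP => m; rewrite !ffunE; case: ifP => _.
  exact: coef_lin.
by rewrite scaler0 addr0.

Qed.

HB.instance Definition _ (F : fieldType) n d (j : 'I_n) :=
  GRing.isLinear.Build F (hpoly F n d) (hpoly F n d.+1) _ (@mulx F n d j)
    (@mulx_is_linear F n d j).

Lemma mulxLE F n d (j : 'I_n) (f : hpoly F n d) : mulxL F d j f = mulx j f.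
Proof. by rewrite /mulxL lfunE. Qed.

Lemma mulxL_ker F n d (i : 'I_n) : lker (mulxL F d i) == 0%VS.
Proof.
rewrite -subv0; apply/subvP => v; rewrite memv_ker memv0 mulxLE.
by move=> /eqP/mulx_inj ->.
Qed.

Lemma mulxL_dim F n d (i : 'I_n) U : \dim (mulxL F d i @: U)%VS = \dim U.
Proof. by rewrite limg_dim_eq // (eqP (mulxL_ker F d i)) capv0. Qed.

Lemma m1_img F n d (i : 'I_n) (U : {vspace hpoly F n d}) :
  (mulxL F d.+1 i @: m1 U)%VS = m1 (mulxL F d i @: U)%VS.
Proof.
rewrite /m1 limg_sum; apply: eq_bigr => j _; rewrite -!limg_comp.
congr (_ @: U)%VS; apply/lfunP => f; by rewrite !comp_lfunE !mulxLE mulx_comm.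
Qed.

Lemma xideal_img F n d (i : 'I_n) : (xideal F i d.+1 <= limg (mulxL F d i))%VS.
Proof.
apply/span_subvP => v /mapP [m]; rewrite mem_filter => /andP [hm _] ->.
have hi : (0 < expo m i)%N.
  by move: hm => /= /orP [/forallP /(_ i)|//]; rewrite ffunE eqxx.
have hs : (\sum_(k < n) dl i (expo m) k)%N = d.
  by apply/eq_add_S; rewrite -sum_dl // sum_expo.
have [m' hm'] := exists_mon hs.
rewrite (monp_mulx F hi hm') -mulxLE; apply: memv_img; exact: memvf.
Qed.

Theorem lemma3p7 (F : fieldType) (n : nat) (gens : seq {ffun 'I_n -> nat}) (i : 'I_n) :
  squarefree_gens gens ->
  Gotzmann (monideal F gens) ->
  (forall d : nat, (monideal F gens d <= xideal F i d)%VS) ->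
  Gotzmann (colon_var (monideal F gens) i).
Proof.
move=> _ HG Hx d J HJ Hdim.
set I := monideal F gens in HG Hx *.
have Himg e : (mulxL F e i @: (mulxL F e i @^-1: I e.+1))%VS = I e.+1.
  apply: lpreimK; exact: subv_trans (Hx e.+1) (xideal_img F e i).
have Hdk : \dim (colon_var I i d) = \dim (I d.+1).
  by rewrite -(Himg d) mulxL_dim.
have Hm1 : \dim (m1 (colon_var I i d)) = \dim (m1 (I d.+1)).
  by rewrite -(Himg d) -m1_img mulxL_dim.
pose J' : graded F n := fun e => match e with
  | 0 => 0%VS | e'.+1 => (mulxL F e' i @: J e')%VS end.
have HJ' : is_hideal J'.
  move=> [|e] j f /=.
    by rewrite memv0 => /eqP ->; rewrite -mulxLE linear0 mem0v.
  case/memv_imgP => g hg ->; rewrite mulxLE mulx_comm -mulxLE.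
  by apply: memv_img; apply: HJ.
have HdJ : \dim (J' d.+1) = \dim (I d.+1) by rewrite /= mulxL_dim Hdim.
have := HG d.+1 J' HJ' HdJ.
by rewrite /= -m1_img mulxL_dim Hm1.
Qed.
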